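(* Let $(F,H)$ be the unique local solution, on its maximal interval of existence $[0,T_{\max})$, of the matrix Riccati system $$F'=\Gamma\otimes\big(\alpha+(c\otimes I_K)^\top H\big)\big(\alpha+(c\otimes I_K)^\top H\big)^\top-F(I_{N-1}\otimes\Lambda^{-1})F,\quad F(0)=0,$$ $$H'=\big(\Gamma\otimes(\alpha+(c\otimes I_K)^\top H)\big)\xi-F(I_{N-1}\otimes\Lambda^{-1})H,\quad H(0)=0.$$ Then $F(\tau)$ is positive semidefinite for every $\tau\in[0,T_{\max})$.
   Context: $N\ge2$, $K\le D$; $\gamma^1,\dots,\gamma^N>0$ with $\gamma^N=\max_n\gamma^n$; $\bar\gamma=(\sum_n1/\gamma^n)^{-1}$; $c=(c_1,\dots,c_{N-1})^\top$ with $c_n=\bar\gamma(1/\gamma^n-1/\gamma^N)$; $\Gamma:=\mathrm{diag}\{\gamma^1,\dots,\gamma^{N-1}\}-\tfrac1N\mathbb 1_{N-1}\mathbb 1_{N-1}^\top\mathrm{diag}\{\gamma^1-\gamma^N,\dots,\gamma^{N-1}-\gamma^N\}$; $\Lambda\in\mathbb R^{K\times K}$ symmetric positive definite; $\alpha\in\mathbb R^{K\times D}$; $\xi\in\mathbb R^{(N-1)D\times D}$; $F$ is $K(N-1)\times K(N-1)$ and $H$ is $K(N-1)\times D$; $\otimes$ is the Kronecker product. A real square matrix $C$ is positive semidefinite if $b^\top Cb\ge0$ for all $b$ (symmetry not required). *)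

(* Defs.v *)
From HB Require Import structures.
From mathcomp Require Import all_boot all_order all_algebra.
From mathcomp Require Import all_classical all_reals all_analysis.

Import Order.TTheory GRing.Theory Num.Theory.
Local Open Scope ring_scope.

Section Defs.
Variable R : realType.

(* entry of a matrix addressed by natural-number indices (0 outside range) *)
Definition mx_at m n (A : 'M[R]_(m, n)) (i j : nat) : R :=
  match @insub _ (fun x => x < m)%N _ i, @insub _ (fun x => x < n)%N _ j with
  | Some i', Some j' => A i' j'
  | _, _ => 0
  end.
Arguments mx_at {m n} A i j.

(* Kronecker product: (A (x) B)_{(i1*m2+i2),(j1*n2+j2)} = A_{i1 j1} B_{i2 j2} *)
Definition kron m1 n1 m2 n2 (A : 'M[R]_(m1, n1)) (B : 'M[R]_(m2, n2))
  : 'M[R]_(m1 * m2, n1 * n2) :=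
  \matrix_(p, q) (mx_at A (p %/ m2) (q %/ n2) * mx_at B (p %% m2) (q %% n2)).
Arguments kron {m1 n1 m2 n2} A B.

(* positive semidefinite (symmetry not required) *)
Definition psd m (C : 'M[R]_m) : Prop :=
  forall b : 'cV[R]_m, 0 <= (b^T *m C *m b) 0 0.

Definition spd m (C : 'M[R]_m) : Prop :=
  C^T = C /\ forall b : 'cV[R]_m, b != 0 -> 0 < (b^T *m C *m b) 0 0.

(* gamma is indexed by 1..N (gamma n = gamma^n) *)
Definition gammabar (N : nat) (gamma : nat -> R) : R :=
  (\sum_(1 <= i < N.+1) (gamma i)^-1)^-1.

Definition cvec (N : nat) (gamma : nat -> R) : 'cV[R]_(N.-1) :=
  \col_(i < N.-1) (gammabar N gamma * ((gamma i.+1)^-1 - (gamma N)^-1)).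

(* Gamma = diag(gamma^1..gamma^{N-1}) - (1/N) 1 1^T diag(gamma^1-gamma^N, ...) *)
Definition Gam (N : nat) (gamma : nat -> R) : 'M[R]_(N.-1) :=
  \matrix_(i < N.-1, j < N.-1)
    ((i == j)%:R * gamma i.+1 - N%:R^-1 * (gamma j.+1 - gamma N)).

(* alpha + (c (x) I_K)^T H   (a K x D matrix; 1*K cast to K) *)
Definition Mterm (N K D : nat) (gamma : nat -> R) (alpha : 'M[R]_(K, D))
  (H : 'M[R]_(N.-1 * K, D)) : 'M[R]_(K, D) :=
  alpha + castmx (mul1n K, erefl D) ((kron (cvec N gamma) (1%:M : 'M[R]_K))^T *m H).
Arguments Mterm N {K D} gamma alpha H.

Definition ricF (N K D : nat) (gamma : nat -> R) (Lam : 'M[R]_K)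
  (alpha : 'M[R]_(K, D)) (F : 'M[R]_(N.-1 * K)) (H : 'M[R]_(N.-1 * K, D))
  : 'M[R]_(N.-1 * K) :=
  let M := Mterm N gamma alpha H in
  kron (Gam N gamma) (M *m M^T)
  - F *m kron (1%:M : 'M[R]_(N.-1)) (invmx Lam) *m F.

Definition ricH (N K D : nat) (gamma : nat -> R) (Lam : 'M[R]_K)
  (alpha : 'M[R]_(K, D)) (xi : 'M[R]_(N.-1 * D, D))
  (F : 'M[R]_(N.-1 * K)) (H : 'M[R]_(N.-1 * K, D)) : 'M[R]_(N.-1 * K, D) :=
  let M := Mterm N gamma alpha H in
  kron (Gam N gamma) M *m xi
  - F *m kron (1%:M : 'M[R]_(N.-1)) (invmx Lam) *m H.

End Defs.

Arguments mx_at {R m n} A i j.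
Arguments kron {R m1 n1 m2 n2} A B.
Arguments psd {R m} C.
Arguments spd {R m} C.
Arguments gammabar {R} N gamma.
Arguments cvec {R} N gamma.
Arguments Gam {R} N gamma.
Arguments Mterm {R} N {K D} gamma alpha H.
Arguments ricF {R} N {K D} gamma Lam alpha F H.
Arguments ricH {R} N {K D} gamma Lam alpha xi F H.

(* Main.v *)
Require Import Defs.
From HB Require Import structures.
From mathcomp Require Import all_boot all_order all_algebra.
From mathcomp Require Import all_classical all_reals all_analysis.
From mathcomp Require Import ring lra zify.
Import Order.TTheory GRing.Theory Num.Theory.
Import numFieldNormedType.Exports.
Local Open Scope classical_set_scope.
Local Open Scope ring_scope.

Section S0.
Variable R : realType.

Definition qfs {n} (X : 'I_n -> 'I_n -> R) (z : 'I_n -> R) : R :=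
  \sum_i \sum_j z i * X i j * z j.

Definition rq {n} (X : 'M[R]_n) (v : 'rV[R]_n) : R := (v *m X *m v^T) 0 0.

Lemma rqE n (X : 'M[R]_n) v : rq X v = qfs (fun i j => X i j) (fun i => v 0 i).
Proof.
rewrite /rq /qfs mxE.
under eq_bigr => j _ do rewrite mxE mulr_suml.
rewrite exchange_big /=; apply: eq_bigr => i _; apply: eq_bigr => j _.
by rewrite !mxE.
Qed.

Lemma mx_atE m n (A : 'M[R]_(m, n)) (i : 'I_m) (j : 'I_n) : mx_at A i j = A i j.
Proof.
rewrite /mx_at (insubT (fun x => x < m)%N (ltn_ord i)) (insubT (fun x => x < n)%N (ltn_ord j)).
by congr (A _ _); apply: val_inj.
Qed.


Lemma fidx_subproof n K (i : 'I_n) (k : 'I_K) : (i * K + k < n * K)%N.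
Proof.
have hi := ltn_ord i; have hk := ltn_ord k; nia.
Qed.

Definition fidx {n K} (i : 'I_n) (k : 'I_K) : 'I_(n * K) := Ordinal (@fidx_subproof n K i k).

Lemma fidx_div n K (i : 'I_n) (k : 'I_K) : ((fidx i k) %/ K)%N = i.
Proof.
have hk := ltn_ord k; have K0 : (0 < K)%N by apply: leq_ltn_trans hk.
by rewrite /= divnMDl // divn_small // addn0.
Qed.

Lemma fidx_mod n K (i : 'I_n) (k : 'I_K) : ((fidx i k) %% K)%N = k.
Proof. by rewrite /= modnMDl modn_small. Qed.

Lemma sum_fidx n K (f : 'I_(n * K) -> R) :
  \sum_p f p = \sum_i \sum_k f (fidx i k).
Proof.
rewrite pair_big /=.
have hb : bijective (fun x : 'I_n * 'I_K => fidx x.1 x.2).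
  apply: inj_card_bij; last by rewrite card_prod !card_ord.
  move=> [i k] [j l] /= [e].
  have K0 : (0 < K)%N by apply: leq_ltn_trans (ltn_ord k).
  have e1 := congr1 (divn^~ K) e; have e2 := congr1 (modn^~ K) e.
  rewrite /= !divnMDl // !divn_small ?ltn_ord // !addn0 in e1.
  rewrite /= !modnMDl !modn_small ?ltn_ord // in e2.
  by congr pair; apply: val_inj.
by rewrite (reindex _ (ssrbool.onW_bij _ hb)).
Qed.

Lemma kron_fidx n1 n2 m2 n3 (X : 'M[R]_(n1, n2)) (Y : 'M[R]_(m2, n3))
   (i : 'I_n1) (k : 'I_m2) (j : 'I_n2) (l : 'I_n3) :
  kron X Y (fidx i k) (fidx j l) = X i j * Y k l.
Proof. by rewrite mxE !fidx_div !fidx_mod !mx_atE. Qed.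

Definition blk {n K} (v : 'rV[R]_(n * K)) (i : 'I_n) : 'I_K -> R := fun k => v 0 (fidx i k).






Definition bil {K} (Y : 'M[R]_K) (a b : 'I_K -> R) : R :=
  \sum_k \sum_l a k * Y k l * b l.

Lemma rq_kron n K (X : 'M[R]_n) (Y : 'M[R]_K) (v : 'rV[R]_(n * K)) :
  rq (kron X Y) v = \sum_i \sum_j X i j * bil Y (blk v i) (blk v j).
Proof.
rewrite rqE /qfs sum_fidx; apply: eq_bigr => i _.
under eq_bigr => k _ do rewrite sum_fidx.
rewrite exchange_big /=; apply: eq_bigr => j _.
rewrite /bil mulr_sumr; apply: eq_bigr => k _.
rewrite mulr_sumr; apply: eq_bigr => l _.
rewrite kron_fidx /blk; ring.
Qed.


Lemma sum_delta n (i : 'I_n) (f : 'I_n -> R) : \sum_j (i == j)%:R * f j = f i.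
Proof.
rewrite (bigD1 i) //= eqxx mul1r big1 ?addr0 // => j /negbTE.
by rewrite eq_sym => ->; rewrite mul0r.
Qed.

End S0.
Arguments rq {R n}. Arguments qfs {R n}. Arguments bil {R K}. Arguments blk {R n K}.

Section S1. Variable R : realType.
Lemma bil_MMt K D (M : 'M[R]_(K, D)) a b :
  bil (M *m M^T) a b = \sum_d (\sum_k a k * M k d) * (\sum_l b l * M l d).
Proof.
rewrite /bil.
transitivity (\sum_k \sum_l \sum_d a k * M k d * (b l * M l d)).
  apply: eq_bigr => k _; apply: eq_bigr => l _.
  rewrite !mxE mulr_sumr mulr_suml; apply: eq_bigr => d _; rewrite !mxE; ring.
under eq_bigr => k _ do rewrite exchange_big.
rewrite exchange_big; apply: eq_bigr => d _ /=.
rewrite mulr_suml; apply: eq_bigr => k _; rewrite mulr_sumr //.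
Qed.

Lemma rq_kron_MMt n K D (X : 'M[R]_n) (M : 'M[R]_(K, D)) v :
  (forall z : 'I_n -> R, 0 <= qfs (fun i j => X i j) z) ->
  0 <= rq (kron X (M *m M^T)) v.
Proof.
move=> hX; rewrite rq_kron.
pose z (d : 'I_D) (i : 'I_n) := \sum_k blk v i k * M k d.
suff -> : \sum_i \sum_j X i j * bil (M *m M^T) (blk v i) (blk v j)
    = \sum_d qfs (fun i j => X i j) (z d).
  by apply: sumr_ge0 => d _; exact: hX.
rewrite /qfs.
transitivity (\sum_i \sum_j \sum_d z d i * X i j * z d j).
  apply: eq_bigr => i _; apply: eq_bigr => j _.
  rewrite bil_MMt mulr_sumr; apply: eq_bigr => d _; rewrite /z; ring.
under eq_bigr => i _ do rewrite exchange_big.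
by rewrite exchange_big.
Qed.

Lemma rq_kron1 n K (Y : 'M[R]_K) (v : 'rV[R]_(n * K)) :
  (forall a, 0 <= bil Y a a) -> 0 <= rq (kron (1%:M : 'M[R]_n) Y) v.
Proof.
move=> hY; rewrite rq_kron; apply: sumr_ge0 => i _.
under eq_bigr => j _ do rewrite mxE.
by rewrite sum_delta; exact: hY.
Qed.

End S1.

Section S2. Variable R : realType.

Lemma cauchy_schwarz_w n (g z : 'I_n -> R) : (forall i, 0 <= g i) ->
  (\sum_i g i * z i) ^+ 2 <= (\sum_i g i) * (\sum_i g i * z i ^+ 2).
Proof.
move=> g0.
have E : \sum_i \sum_j g i * g j * (z i - z j) ^+ 2 =
   2 * ((\sum_i g i) * (\sum_i g i * z i ^+ 2) - (\sum_i g i * z i) ^+ 2).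
  transitivity (\sum_i \sum_j (g i * z i ^+ 2 * g j + g i * (g j * z j ^+ 2)
                 - 2 * (g i * z i) * (g j * z j))).
    by apply: eq_bigr => i _; apply: eq_bigr => j _; ring.
  under eq_bigr => i _ do rewrite sumrB big_split /= -!mulr_sumr.
  rewrite sumrB big_split /= -!mulr_suml.
  rewrite -mulr_sumr; ring.
have : 0 <= \sum_i \sum_j g i * g j * (z i - z j) ^+ 2.
  apply: sumr_ge0 => i _; apply: sumr_ge0 => j _.
  by apply: mulr_ge0; [apply: mulr_ge0|apply: sqr_ge0].
rewrite E; lra.
Qed.

Lemma Gam_psd N (gamma : nat -> R) : (2 <= N)%N ->
  (forall n, (1 <= n <= N)%N -> 0 < gamma n) ->
  (forall n, (1 <= n <= N)%N -> gamma n <= gamma N) ->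
  forall z, 0 <= qfs (fun i j => Gam N gamma i j) z.
Proof.
move=> N2 gpos gle z.
set n := N.-1.
pose g (i : 'I_n) := gamma i.+1.
have hg : forall i : 'I_n, (1 <= i.+1 <= N)%N.
  by move=> i; have := ltn_ord i; rewrite /n; lia.
have g0 : forall i, 0 <= g i by move=> i; apply/ltW/gpos/hg.
set gN := gamma N.
have gN0 : 0 < gN by apply: gpos; lia.
set X := \sum_i g i * z i ^+ 2.
set s := \sum_i z i.
set u := \sum_i g i * z i.
set G := \sum_i g i.
have E : qfs (fun i j => Gam N gamma i j) z = X - N%:R^-1 * s * (u - gN * s).
  rewrite /qfs.
  transitivity (\sum_i (\sum_j (i == j)%:R * (z i * g i * z j))
                 - \sum_i \sum_j z i * (N%:R^-1 * (g j - gN)) * z j).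
    rewrite -sumrB; apply: eq_bigr => i _; rewrite -sumrB; apply: eq_bigr => j _.
    rewrite mxE /g /gN; ring.
  under eq_bigr => i _ do rewrite sum_delta.
  congr (_ - _); first by apply: eq_bigr => i _; rewrite /g; ring.
  have -> : u - gN * s = \sum_j (g j - gN) * z j.
    by rewrite /u /s mulr_sumr -sumrB; apply: eq_bigr => j _; ring.
  rewrite mulr_sumr exchange_big /=; apply: eq_bigr => j _.
  rewrite /s mulr_sumr mulr_suml; apply: eq_bigr => i _; ring.
have cs : u ^+ 2 <= G * X by apply: cauchy_schwarz_w.
have X0 : 0 <= X by apply: sumr_ge0 => i _; apply: mulr_ge0 => //; apply: sqr_ge0.
have GN : G <= n%:R * gN.
  rewrite /G; apply: (@le_trans _ _ (\sum_(i < n) gN)).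
    by apply: ler_sum => i _; exact/gle/hg.
  by rewrite sumr_const card_ord mulr_natl.
have Nn : N%:R = n%:R + 1 :> R.
  by rewrite /n natr1 prednK //; lia.
have n0 : 0 <= n%:R :> R by [].
have h1 : 0 <= (4 * N%:R * gN - G) * X.
  apply: mulr_ge0 => //; rewrite Nn; nra.
have h2 : 0 <= 4 * gN * (N%:R * X - s * u + gN * s ^+ 2).
  have : 0 <= (2 * gN * s - u) ^+ 2 by apply: sqr_ge0.
  nra.
have h3 : 0 <= N%:R * X - s * u + gN * s ^+ 2.
  by move: h2; rewrite pmulr_rge0 // mulr_gt0.
have NP : 0 < N%:R :> R by rewrite ltr0n; lia.
rewrite E.
have -> : X - N%:R^-1 * s * (u - gN * s) = N%:R^-1 * (N%:R * X - s * u + gN * s ^+ 2).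
  by field; rewrite gt_eqF.
by apply: mulr_ge0 => //; rewrite invr_ge0 ltW.
Qed.
End S2.

Section S3. Variable R : realType.

Definition bl {m} (X : 'M[R]_m) (v w : 'rV[R]_m) := (v *m X *m w^T) 0 0.
Definition nrm2 {m} (v : 'rV[R]_m) := (v *m v^T) 0 0.

Lemma blE m (X : 'M[R]_m) v w : bl X v w = \sum_i \sum_j v 0 i * X i j * w 0 j.
Proof.
rewrite /bl mxE.
under eq_bigr => j _ do rewrite mxE mulr_suml.
rewrite exchange_big /=; apply: eq_bigr => i _; apply: eq_bigr => j _.
by rewrite !mxE.
Qed.

Lemma rq_bl m (X : 'M[R]_m) v : rq X v = bl X v v. Proof. by []. Qed.

Lemma nrm2E m (v : 'rV[R]_m) : nrm2 v = \sum_i v 0 i ^+ 2.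
Proof. by rewrite /nrm2 mxE; apply: eq_bigr => i _; rewrite !mxE expr2. Qed.

Lemma nrm2_ge0 m (v : 'rV[R]_m) : 0 <= nrm2 v.
Proof. by rewrite nrm2E; apply: sumr_ge0 => i _; apply: sqr_ge0. Qed.

Lemma nrm2_eq0 m (v : 'rV[R]_m) : nrm2 v = 0 -> v = 0.
Proof.
rewrite nrm2E => /eqP; rewrite psumr_eq0 => [/allP h|i _]; last exact: sqr_ge0.
apply/rowP => i; rewrite !mxE; apply/eqP.
by rewrite -sqrf_eq0; apply: h; rewrite mem_index_enum.
Qed.

Lemma blDl m (X : 'M[R]_m) v1 v2 w : bl X (v1 + v2) w = bl X v1 w + bl X v2 w.
Proof. by rewrite /bl !mulmxDl mxE. Qed.
Lemma blZl m (X : 'M[R]_m) a v w : bl X (a *: v) w = a * bl X v w.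
Proof. by rewrite /bl -!scalemxAl mxE. Qed.
Lemma blDr m (X : 'M[R]_m) v w1 w2 : bl X v (w1 + w2) = bl X v w1 + bl X v w2.
Proof. by rewrite /bl linearD /= mulmxDr mxE. Qed.
Lemma blZr m (X : 'M[R]_m) a v w : bl X v (a *: w) = a * bl X v w.
Proof. by rewrite /bl linearZ /= -scalemxAr mxE. Qed.
Lemma blNl m (X : 'M[R]_m) v w : bl X (- v) w = - bl X v w.
Proof. by rewrite -scaleN1r blZl mulN1r. Qed.
Lemma blNr m (X : 'M[R]_m) v w : bl X v (- w) = - bl X v w.
Proof. by rewrite -scaleN1r blZr mulN1r. Qed.
Lemma blDm m (X Y : 'M[R]_m) v w : bl (X + Y) v w = bl X v w + bl Y v w.
Proof. by rewrite /bl mulmxDr mulmxDl mxE. Qed.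
Lemma blBm m (X Y : 'M[R]_m) v w : bl (X - Y) v w = bl X v w - bl Y v w.
Proof. by rewrite /bl mulmxBr mulmxBl !mxE. Qed.
Lemma bl_scalar m (a : R) v (w : 'rV[R]_m) : bl a%:M v w = a * (v *m w^T) 0 0.
Proof. by rewrite /bl mul_mx_scalar -scalemxAl !mxE. Qed.
Lemma bl_tr m (X : 'M[R]_m) v w : bl X^T v w = bl X w v.
Proof.
rewrite !blE exchange_big /=; apply: eq_bigr => i _; apply: eq_bigr => j _.
by rewrite mxE; ring.
Qed.
Lemma bl_sym m (X : 'M[R]_m) v w : X^T = X -> bl X v w = bl X w v.
Proof. by move=> h; rewrite -bl_tr h. Qed.
Lemma bl_FAF m (F A : 'M[R]_m) v : bl (F *m A *m F) v v = bl A (v *m F) (v *m F^T).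
Proof. by rewrite /bl trmx_mul trmxK !mulmxA. Qed.
Lemma bl_eq0_row m (C : 'M[R]_m) v : (forall u, bl C v u = 0) -> v *m C = 0.
Proof.
move=> h; apply/rowP => k; have := h (delta_mx 0 k).
by rewrite /bl trmx_delta -colE !mxE => ->.
Qed.

Lemma psd_zero m (B : 'M[R]_m) v : (forall u, 0 <= bl B u u) -> bl B v v = 0 ->
  forall u, bl B v u + bl B u v = 0.
Proof.
move=> hB hv u.
set b := bl B v u + bl B u v; set c := bl B u u.
have c0 : 0 <= c by apply: hB.
have key : forall s, 0 <= s * b + s ^+ 2 * c.
  move=> s; have := hB (v + s *: u).
  rewrite !blDl !blDr !blZl !blZr hv /b /c; lra.
have := key (- b / (c + 1)).
have c1 : 0 < c + 1 by lra.
set s := - b / (c + 1).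
have -> : s * b + s ^+ 2 * c = - (b ^+ 2) / (c + 1) ^+ 2.
  by rewrite /s; field; rewrite gt_eqF.
rewrite mulNr oppr_ge0 pmulr_lle0 ?invr_gt0 ?exprn_gt0 //.
by move=> hb; apply/eqP; rewrite -sqrf_eq0 eq_le hb sqr_ge0.
Qed.


Lemma deriv_lb m (F A Q : 'M[R]_m) v k a : A^T = A -> (forall u, 0 <= bl A u u) ->
  0 <= bl Q v v -> bl A v v <= a -> v *m F = (2 * k) *: v - v *m F^T ->
  - (k ^+ 2 * a) <= bl (Q - F *m A *m F) v v.
Proof.
move=> As Ap Qp Aa rowid.
rewrite blBm bl_FAF rowid.
set p := v *m F^T.
have hy := Ap (p - k *: v).
rewrite !(blDl, blDr, blZl, blZr, blNl, blNr) in hy *.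
rewrite (@bl_sym _ A p v As) in hy *.
have hk : 0 <= k ^+ 2 * (a - bl A v v) by apply: mulr_ge0; [apply: sqr_ge0|lra].
nra.
Qed.

Lemma deriv_left_min (g : R -> R) (x d a : R) : a < x -> is_derive x 1 g d ->
  (forall t, a < t < x -> g x <= g t) -> d <= 0.
Proof.
move=> ax dg gmin.
have fdrvbl : derivable g x 1 by case: dg.
rewrite -(@derive_val _ _ _ _ _ _ _ dg).
rewrite ['D_1 g x]cvg_at_leftE; last exact: fdrvbl.
apply: limr_le.
  rewrite -(cvg_at_leftE (fun h : R => h^-1 *: ((g \o shift x) _ - g x))) //.
  apply: cvg_trans fdrvbl; apply: cvg_app.
  move=> A [e egt0 Ae]; exists e => // y ye ylt0; apply: Ae => //.
  exact/ltr0_neq0.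
near=> h; apply: mulr_le0_ge0.
  by rewrite invr_le0; apply: ltW; near: h; exists 1 => /=.
rewrite subr_ge0 [_%:A]mulr1; apply: gmin; near: h.
exists (x - a); first by rewrite /= subr_gt0.
move=> h; rewrite /= distrC subr0.
move=> /ltr_normlP [] h1 h2 hlt0.
apply/andP; split; lra.
Unshelve. all: by end_near. Qed.

Lemma coord_le1 m (v : 'rV[R]_m) i : nrm2 v = 1 -> `|v 0 i| <= 1.
Proof.
move=> h.
have : v 0 i ^+ 2 <= 1.
  rewrite -h nrm2E (bigD1 i) //= lerDl; apply: sumr_ge0 => j _; exact: sqr_ge0.
rewrite -real_normK ?num_real // => h2.
have := normr_ge0 (v 0 i); nra.
Qed.

Lemma bl_bound m (X : 'M[R]_m) v : nrm2 v = 1 ->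
  `|bl X v v| <= \sum_i \sum_j `|X i j|.
Proof.
move=> h; rewrite blE; apply: le_trans (ler_norm_sum _ _ _) _.
apply: ler_sum => i _; apply: le_trans (ler_norm_sum _ _ _) _.
apply: ler_sum => j _; rewrite !normrM.
rewrite -[leRHS]mul1r -[leRHS]mulr1.
apply: ler_pM; rewrite ?mulr_ge0 ?normr_ge0 //; last exact: coord_le1.
by apply: ler_pM; rewrite ?normr_ge0 //; exact: coord_le1.
Qed.

Lemma nrm2_bl m (v : 'rV[R]_m) : nrm2 v = bl 1%:M v v.
Proof. by rewrite /bl /nrm2 mulmx1. Qed.

Lemma bl0 m (X : 'M[R]_m) : bl X 0 0 = 0.
Proof. by rewrite /bl !mul0mx mxE. Qed.

Lemma homog m (X : 'M[R]_m) k : (forall v, nrm2 v = 1 -> k <= bl X v v) ->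
  forall u, k * nrm2 u <= bl X u u.
Proof.
move=> hk u.
have [/nrm2_eq0 ->|s0] := eqVneq (nrm2 u) 0.
  by rewrite /nrm2 mul0mx mxE mulr0 bl0.
have spos : 0 < nrm2 u by rewrite lt_neqAle eq_sym s0 nrm2_ge0.
set r := Num.sqrt (nrm2 u).
have r0 : 0 < r by rewrite sqrtr_gt0.
have rr : r ^+ 2 = nrm2 u by rewrite sqr_sqrtr // ltW.
have := hk (r^-1 *: u).
rewrite blZl blZr nrm2_bl blZl blZr -nrm2_bl.
have -> : r^-1 * (r^-1 * nrm2 u) = 1 by rewrite -rr; field; rewrite gt_eqF.
move=> /(_ erefl) h.
have : k * r ^+ 2 <= r ^+ 2 * (r^-1 * (r^-1 * bl X u u)) by rewrite mulrC ler_pM2l ?exprn_gt0.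
by rewrite rr; have -> : nrm2 u * (r^-1 * (r^-1 * bl X u u)) = bl X u u
  by rewrite -rr; field; rewrite gt_eqF.
Qed.

Definition mk m (t : R) (v : 'rV[R]_m) : 'rV[R]_m.+1 :=
  \row_k (match unlift ord0 k with Some i => v 0 i | None => t end).
Definition tt m (x : 'rV[R]_m.+1) : R := x 0 ord0.
Definition vv m (x : 'rV[R]_m.+1) : 'rV[R]_m := \row_i x 0 (lift ord0 i).

Arguments mk {m}. Arguments tt {m}. Arguments vv {m}.
Lemma tt_mk m t (v : 'rV[R]_m) : tt (mk t v) = t.
Proof. by rewrite /tt /mk mxE unlift_none. Qed.
Lemma vv_mk m t (v : 'rV[R]_m) : vv (mk t v) = v.
Proof. by apply/rowP => i; rewrite /vv /mk !mxE liftK. Qed.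
Lemma mk_ttvv m (x : 'rV[R]_m.+1) : mk (tt x) (vv x) = x.
Proof.
apply/rowP => k; rewrite /mk /tt /vv !mxE.
by case: unliftP => [i ->|->]; rewrite ?mxE.
Qed.

Lemma cvg_sumR {T : Type} (F : set_system T) (FF : Filter F) n
  (f : 'I_n -> T -> R) (l : 'I_n -> R) :
  (forall i, f i x @[x --> F] --> l i) ->
  (\sum_i f i x) @[x --> F] --> \sum_i l i.
Proof.
move=> h.
exact: (@cvg_big _ _ +%R 0 xpredT add_continuous T F (index_enum _) f l FF (fun i _ => h i)).
Qed.

Lemma cont_sumR {T : topologicalType} (x : T) n (f : 'I_n -> T -> R) :
  (forall i, {for x, continuous (f i)}) -> {for x, continuous (fun y => \sum_i f i y)}.
Proof. by move=> h; exact: (@cvg_sumR _ (nbhs x) (nbhs_pfilter x) n f (fun i => f i x) h). Qed.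

Lemma cont_obj m (G : R -> 'M[R]_m) (h : R -> R) (x : 'rV[R]_m.+1) :
  {for tt x, continuous h} -> (forall i j, {for tt x, continuous (fun t => G t i j)}) ->
  {for x, continuous (fun y : 'rV[R]_m.+1 => h (tt y) * bl (G (tt y)) (vv y) (vv y))}.
Proof.
move=> hc Gc.
have ctt : {for x, continuous (@tt m)} by apply: coord_continuous.
apply: continuousM; first exact: continuous_comp ctt hc.
have -> : (fun y : 'rV[R]_m.+1 => bl (G (tt y)) (vv y) (vv y)) =
   (fun y => \sum_i \sum_j y 0 (lift ord0 i) * G (tt y) i j * y 0 (lift ord0 j)).
  by apply/funext => y; rewrite blE; apply: eq_bigr => i _; apply: eq_bigr => j _; rewrite !mxE.
apply: (@cont_sumR 'rV[R]_m.+1) => i.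
apply: (@cont_sumR 'rV[R]_m.+1) => j.
have c1 : {for x, continuous (fun y : 'rV[R]_m.+1 => y 0 (lift ord0 i))}.
  exact: coord_continuous.
have c3 : {for x, continuous (fun y : 'rV[R]_m.+1 => y 0 (lift ord0 j))}.
  exact: coord_continuous.
have c2 : {for x, continuous (fun y : 'rV[R]_m.+1 => G (tt y) i j)}.
  exact: continuous_comp ctt (Gc i j).
exact: (continuousM (continuousM c1 c2) c3).
Qed.

Lemma nrm2vv_cont m : continuous (fun x : 'rV[R]_m.+1 => nrm2 (vv x)).
Proof.
have -> : (fun x : 'rV[R]_m.+1 => nrm2 (vv x)) =
   (fun y => \sum_i y 0 (lift ord0 i) * y 0 (lift ord0 i)).
  by apply/funext => y; rewrite nrm2E; apply: eq_bigr => i _; rewrite !mxE expr2.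
move=> x; apply: (@cont_sumR 'rV[R]_m.+1) => i.
have c1 : {for x, continuous (fun y : 'rV[R]_m.+1 => y 0 (lift ord0 i))}.
  exact: coord_continuous.
exact: (continuousM c1 c1).
Qed.

Lemma Xs_compact m (d tau : R) :
  compact [set x : 'rV[R]_m.+1 | d <= tt x <= tau /\ nrm2 (vv x) = 1].
Proof.
apply: bounded_closed_compact.
  rewrite /bounded_near.
  apply: filterS (nbhs_pinfty_ge (num_real (`|d| + `|tau| + 1))) => M hM x [/andP[h1 h2] hn].
  rewrite /= (_ : `|x| = mx_norm x) //.
  rewrite mx_normrE; apply: bigmax_le; first by apply: le_trans hM.
  move=> [i k] _ /=; rewrite (ord1 i); apply: le_trans hM.
  case: (unliftP ord0 k) => [j ->|->].
    have := @coord_le1 _ (vv x) j hn; rewrite mxE => h.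
    by apply: le_trans h _; rewrite lerDr addr_ge0.
  rewrite -/(tt x).
  have := normr_ge0 d; have := normr_ge0 tau.
  case: (ler0P (tt x)) => ht.
    have := ler_norm d; have : - d <= `|d| by rewrite -normrN ler_norm.
    rewrite ler0_norm //; lra.
  rewrite gtr0_norm //; have := ler_norm tau; lra.
have -> : [set x : 'rV[R]_m.+1 | d <= tt x <= tau /\ nrm2 (vv x) = 1] =
   (tt @^-1` [set y | d <= y]) `&` (tt @^-1` [set y | y <= tau])
    `&` ((fun x => nrm2 (vv x)) @^-1` [set y | y = 1]).
  apply/seteqP; split => x /=.
    by move=> [/andP[h1 h2] h3].
  by move=> [[h1 h2] h3]; rewrite h1 h2.
apply: closedI; first apply: closedI.
- by apply: preimage_closed; [move=> x _; exact: coord_continuous|exact: closed_ge].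
- by apply: preimage_closed; [move=> x _; exact: coord_continuous|exact: closed_le].
- by apply: preimage_closed; [move=> x _; exact: nrm2vv_cont|exact: closed_eq].
Qed.
End S3.
Arguments bl {R m}. Arguments nrm2 {R m}. Arguments mk {R m}. Arguments tt {R m}. Arguments vv {R m}.

Section S4. Variable R : realType.

Lemma entry_bound (f : R -> R) (a b : R) : a <= b -> {within `[a, b], continuous f} ->
  exists C, 0 <= C /\ forall t, a <= t <= b -> `|f t| <= C.
Proof.
move=> ab cf.
have cn : {within `[a, b], continuous (fun t => `|f t|)}.
  by move=> x; apply: cvg_norm; exact: cf.
have [c cab hc] := EVT_max ab cn.
exists `|f c|; split => // t tab; apply: hc; by rewrite in_itv.
Qed.

Lemma w_derive (L t : R) : is_derive t 1 (fun s => expR (- (L * s))) (- L * expR (- (L * t))).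
Proof.
have h1 : is_derive t 1 (fun s : R => - (L * s)) (- L).
  have -> : (fun s : R => - (L * s)) = - (L *: (@id R)).
    by apply/funext => s /=; rewrite /GRing.scale /=.
  have -> : - L = - (L *: (1 : R)) by rewrite /GRing.scale /= mulr1.
  apply: is_deriveN; apply: is_deriveZ; exact: is_derive_id.
have := @is_derive1_comp _ expR (fun s => - (L * s)) t _ _ (is_derive_expR _) h1.
by rewrite mulrC.
Qed.


Lemma scaleRE (a b : R) : a *: b = a * b. Proof. by []. Qed.

Lemma bl_derive m (F : R -> 'M[R]_m) (D : 'M[R]_m) (v : 'rV[R]_m) (t : R) :
  (forall i j, is_derive t 1 (fun s => F s i j) (D i j)) ->
  is_derive t 1 (fun s => bl (F s) v v) (bl D v v).
Proof.
move=> hD.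
have -> : (fun s => bl (F s) v v) =
    \sum_i \sum_j ((v 0 i * v 0 j) *: (fun s => F s i j)).
  apply/funext => s; rewrite blE fct_sumE; apply: eq_bigr => i _.
  rewrite fct_sumE; apply: eq_bigr => j _.
  by rewrite scalrfctE /= scaleRE; ring.
have hs := @is_derive_sum _ _ _ m (fun i => \sum_j ((v 0 i * v 0 j) *: (fun s => F s i j))) t 1
  (fun i => \sum_j ((v 0 i * v 0 j) *: D i j))
  (fun i => @is_derive_sum _ _ _ m _ t 1 _ (fun j => is_deriveZ (v 0 i * v 0 j) (hD i j))).
apply: (is_derive_eq hs).
rewrite blE; apply: eq_bigr => i _; apply: eq_bigr => j _.
by rewrite scaleRE; ring.
Qed.

Theorem core m (F Q : R -> 'M[R]_m.+1) (A : 'M[R]_m.+1) (T : R) :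
  A^T = A -> (forall u, 0 <= bl A u u) ->
  (forall t, 0 < t < T -> forall u, 0 <= bl (Q t) u u) ->
  (forall i j, {within `[0, T[, continuous (fun t => F t i j)}) ->
  (forall t, 0 < t < T -> forall i j,
      is_derive t 1 (fun s => F s i j) ((Q t - F t *m A *m F t) i j)) ->
  F 0 = 0 -> forall tau, 0 <= tau < T -> forall u, 0 <= bl (F tau) u u.
Proof.
move=> As Ap Qp Fc Fd F0 tau /andP[tau0 tauT] u0.
have [tau_eq0|tauneq] := eqVneq tau 0.
  by rewrite tau_eq0 F0 /bl mulmx0 mul0mx mxE.
have taupos : 0 < tau by rewrite lt_neqAle eq_sym tauneq.
rewrite leNgt; apply/negP => neg.
have [v0 [v0n beta_neg]] : exists v, nrm2 v = 1 /\ bl (F tau) v v < 0.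
  case: (pselect (exists v, nrm2 v = 1 /\ bl (F tau) v v < 0)) => // hn.
  have h : forall v, nrm2 v = 1 -> 0 <= bl (F tau) v v.
    by move=> v hv; rewrite leNgt; apply/negP => hv2; apply: hn; exists v.
  by have := @homog R _ _ 0 h u0; rewrite mul0r; lra.
set beta := bl (F tau) v0 v0.
have Fc' : forall i j, {within `[0, tau], continuous (fun t => F t i j)}.
  move=> i j; apply: continuous_subspaceW (Fc i j) => t /=.
  rewrite !in_itv /= => /andP[h1 h2]; rewrite h1 /=; exact: le_lt_trans h2 tauT.
have [Cf HCf] : exists Cf : 'I_m.+1 * 'I_m.+1 -> R, forall p,
    0 <= Cf p /\ forall t, 0 <= t <= tau -> `|F t p.1 p.2| <= Cf p.
  apply: (@fin_all_exists _ (fun=> R)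
     (fun p C => 0 <= C /\ forall t, 0 <= t <= tau -> `|F t p.1 p.2| <= C)) => p.
  exact: entry_bound (ltW taupos) (Fc' p.1 p.2).
set C := \sum_i \sum_j Cf (i, j).
have HC : forall t, 0 <= t <= tau -> forall v, nrm2 v = 1 -> `|bl (F t) v v| <= C.
  move=> t ht v hv; apply: le_trans (@bl_bound R _ (F t) v hv) _.
  by apply: ler_sum => i _; apply: ler_sum => j _; exact: (HCf (i, j)).2.
have C0 : 0 <= C by apply: sumr_ge0 => i _; apply: sumr_ge0 => j _; exact: (HCf (i, j)).1.
set a := \sum_i \sum_j `|A i j|.
have Ha : forall v, nrm2 v = 1 -> bl A v v <= a.
  by move=> v hv; apply: le_trans (ler_norm _) (@bl_bound R _ A v hv).
have a0 : 0 <= a by apply: sumr_ge0 => i _; apply: sumr_ge0 => j _.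
set L := a * C + 1.
have L0 : 0 < L by rewrite /L; have := mulr_ge0 a0 C0; lra.
pose w t := expR (- (L * t)).
have w0 : forall t, 0 < w t by move=> t; exact: expR_gt0.
have w1 : forall t, 0 <= t -> w t <= 1.
  by move=> t t0; rewrite /w expR_le1 oppr_le0 mulr_ge0 // ltW.
set eta := - (w tau * beta).
have eta0 : 0 < eta by rewrite /eta oppr_gt0 pmulr_rlt0.
have [delta [d0 [dtau Hd]]] : exists delta, 0 < delta /\ delta < tau /\
    \sum_i \sum_j `|F delta i j| < eta.
  have Fr : forall i j, (fun t => F t i j) @ 0^'+ --> F 0 i j.
    by move=> i j; have [_ h _] := (continuous_within_itvP _ taupos).1 (Fc' i j).
  have Sr : (fun t => \sum_i \sum_j `|F t i j|) @ 0^'+ --> \sum_i \sum_j `|F 0 i j|.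
    apply: (@cvg_sumR R R 0^'+ (at_right_proper_filter 0) _
      (fun i t => \sum_j `|F t i j|) (fun i => \sum_j `|F 0 i j|)) => i.
    apply: (@cvg_sumR R R 0^'+ (at_right_proper_filter 0) _
      (fun j t => `|F t i j|) (fun j => `|F 0 i j|)) => j.
    by apply: cvg_norm; exact: Fr.
  have S0 : \sum_i \sum_j `|F 0 i j| = 0.
    by rewrite F0; apply: big1 => i _; apply: big1 => j _; rewrite mxE normr0.
  rewrite S0 in Sr.
  have hnear : \forall t \near 0^'+, 0 < t /\ t < tau /\ \sum_i \sum_j `|F t i j| < eta.
    have hh : \forall t \near 0^'+, `|0 - \sum_i \sum_j `|F t i j| | < eta.
      exact: (cvgrPdist_lt _ _).1 Sr eta eta0.
    near=> t; split; first by near: t; exact: nbhs_right_gt.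
    split; first by near: t; exact: nbhs_right_lt.
    suff : `|0 - \sum_i \sum_j `|F t i j| | < eta.
      by rewrite sub0r normrN; apply: le_lt_trans; exact: ler_norm.
    by near: t; exact: hh.
  exact: filter_ex hnear.
pose Xs := [set x : 'rV[R]_m.+2 | delta <= tt x <= tau /\ nrm2 (vv x) = 1].
pose f (x : 'rV[R]_m.+2) := w (tt x) * bl (F (tt x)) (vv x) (vv x).
have Xc : compact Xs := @Xs_compact R m.+1 delta tau.
have XsP : forall t v, delta <= t <= tau -> nrm2 v = 1 -> Xs (mk t v).
  by move=> t v ht hv; rewrite /Xs /= tt_mk vv_mk.
have Xn : Xs !=set0.
  by exists (mk tau v0); apply: XsP => //; rewrite lexx (ltW dtau).
have Fcont : forall t, 0 < t < T -> forall i j, {for t, continuous (fun s => F s i j)}.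
  move=> t ht i j; apply: differentiable_continuous; apply/derivable1_diffP.
  by case: (Fd t ht i j).
have wc : forall t, {for t, continuous w}.
  move=> t; apply: differentiable_continuous; apply/derivable1_diffP.
  by case: (w_derive L t).
have fc : {within Xs, continuous f}.
  apply: continuous_in_subspaceT => x; rewrite inE => -[/andP[h1 h2] _].
  apply: cont_obj; first exact: wc.
  move=> i j; apply: Fcont; apply/andP; split; first exact: lt_le_trans d0 h1.
  exact: le_lt_trans h2 tauT.
have [xs Xxs xmin] := EVT_min_rV Xn Xc fc.
have xmin' : forall t v, delta <= t <= tau -> nrm2 v = 1 -> f xs <= w t * bl (F t) v v.
  move=> t v ht hv; have := xmin (mk t v); rewrite /f tt_mk vv_mk; apply.
  by rewrite inE; exact: XsP.
move: Xxs; rewrite inE => -[/andP[hds hst] hvs].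
set ts := tt xs; set vs := vv xs.
have fxs : f xs = w ts * bl (F ts) vs vs by [].
have fle : f xs <= - eta.
  have := xmin' tau v0; rewrite lexx (ltW dtau) /= => /(_ isT v0n).
  by rewrite /eta opprK.
have tsd : delta < ts.
  rewrite lt_neqAle hds andbT; apply/eqP => ed.
  have hb := @bl_bound R _ (F delta) vs hvs.
  move: fle; rewrite fxs -ed => fle.
  have := w0 delta; have := w1 delta (ltW d0).
  have := ler_norm (bl (F delta) vs vs); have : - bl (F delta) vs vs <= `|bl (F delta) vs vs|.
    by rewrite -normrN ler_norm.
  move: Hd hb fle; nra.
pose k : R := bl (F ts) vs vs.
have kneg : k < 0.
  move: fle; rewrite fxs -/k => fle; rewrite ltNge; apply/negP => k0.
  have := mulr_ge0 (ltW (w0 ts)) k0; lra.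
have kall : forall v, nrm2 v = 1 -> k <= bl (F ts) v v.
  move=> v hv; have := xmin' ts v; rewrite hds hst /= => /(_ isT hv).
  by rewrite fxs ler_pM2l.
have kall2 := @homog R _ _ _ kall.
have Bpsd : forall u, 0 <= bl (F ts - k%:M) u u.
  by move=> u; rewrite blBm bl_scalar -/(nrm2 u); have := kall2 u; lra.
have Bv : bl (F ts - k%:M) vs vs = 0.
  by rewrite blBm bl_scalar -/(nrm2 vs) hvs mulr1 subrr.
have hz := @psd_zero R _ _ vs Bpsd Bv.
have rowid : vs *m F ts = (2 * k) *: vs - vs *m (F ts)^T.
  have h0 : vs *m ((F ts - k%:M) + (F ts - k%:M)^T) = 0.
    apply: bl_eq0_row => u; rewrite blDm bl_tr; exact: hz u.
  have e : (F ts - k%:M) + (F ts - k%:M)^T = F ts + (F ts)^T - (2 * k)%:M.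
    apply/matrixP => i j; rewrite !mxE [j == i]eq_sym.
    by case: (i == j); rewrite /= ?mulr1n ?mulr0n; ring.
  rewrite e mulmxBr mulmxDr mul_mx_scalar in h0.
  by move/eqP: h0; rewrite subr_eq0 => /eqP <-; rewrite addrK.
have tsT : 0 < ts < T.
  by apply/andP; split; [exact: lt_trans d0 tsd | exact: le_lt_trans hst tauT].
pose r t := bl (F t) vs vs.
have dr : is_derive ts 1 r (bl (Q ts - F ts *m A *m F ts) vs vs).
  exact: bl_derive (Fd ts tsT).
have dg := is_deriveM (w_derive L ts) dr.
have gmin : forall t, delta < t < ts ->
    ((fun s => expR (- (L * s))) * r) ts <= ((fun s => expR (- (L * s))) * r) t.
  move=> t /andP[h1 h2]; rewrite !mulrfctE.
  apply: xmin' hvs; rewrite (ltW h1) /=; exact: le_trans (ltW h2) hst.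
have dle := @deriv_left_min R _ _ _ _ tsd dg gmin.
have lb := @deriv_lb R _ (F ts) A (Q ts) vs k a As Ap (Qp ts tsT vs) (Ha vs hvs) rowid.
have kC : `|k| <= C by apply: HC => //; rewrite (ltW (lt_trans d0 tsd)) hst.
move: dle; rewrite !scaleRE -/(w ts) -/(r ts) /r -/k.
have wts := w0 ts.
have nk : `|k| = - k by rewrite ltr0_norm.
rewrite nk in kC.
have h3 : 0 <= - k * (a * (C + k)) by apply: mulr_ge0; [lra| apply: mulr_ge0; lra].
move: lb; set D := bl _ vs vs => lb dle.
have : 0 < w ts * (D + k * (- L)).
  apply: mulr_gt0 => //; rewrite /L; nra.
lra.
Unshelve. all: by end_near.
Qed.
End S4.

Section S5. Variable R : realType.

Lemma mx_at_tr m n (X : 'M[R]_(m, n)) i j : mx_at X^T i j = mx_at X j i.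
Proof.
rewrite /mx_at.
case: insubP => [i' _ _|_]; case: insubP => [j' _ _|_] //=.
by rewrite mxE.
Qed.

Lemma kron_tr n1 n2 m1 m2 (X : 'M[R]_(n1, n2)) (Y : 'M[R]_(m1, m2)) :
  (kron X Y)^T = kron X^T Y^T.
Proof. by apply/matrixP => p q; rewrite !mxE !mx_at_tr. Qed.

Lemma core_any n (F Q : R -> 'M[R]_n) (A : 'M[R]_n) (T : R) :
  A^T = A -> (forall u, 0 <= bl A u u) ->
  (forall t, 0 < t < T -> forall u, 0 <= bl (Q t) u u) ->
  (forall i j, {within `[0, T[, continuous (fun t => F t i j)}) ->
  (forall t, 0 < t < T -> forall i j,
      is_derive t 1 (fun s => F s i j) ((Q t - F t *m A *m F t) i j)) ->
  F 0 = 0 -> forall tau, 0 <= tau < T -> forall u, 0 <= bl (F tau) u u.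
Proof.
case: n F Q A => [|n] F Q A.
  by move=> *; rewrite /bl mxE big_ord0.
exact: core.
Qed.

Lemma spd_unit K (Lam : 'M[R]_K) : spd Lam -> Lam \in unitmx.
Proof.
move=> [_ hp]; rewrite unitmxE unitfE; apply/negP => /det0P [v v0 hv].
suff hv0 : v^T != 0 by have := hp _ hv0; rewrite trmxK hv mul0mx mxE ltxx.
by apply: contraNneq v0 => h; rewrite -[v]trmxK h linear0.
Qed.

Lemma spd_psd K (Lam : 'M[R]_K) : spd Lam -> forall z, 0 <= bl Lam z z.
Proof.
move=> [_ hp] z; have [->|z0] := eqVneq z 0; first by rewrite bl0.
have := hp z^T; rewrite trmxK => h; apply/ltW/h.
by apply: contraNneq z0 => h0; rewrite -[z]trmxK h0 linear0.
Qed.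

Lemma inv_sym K (Lam : 'M[R]_K) : spd Lam -> (invmx Lam)^T = invmx Lam.
Proof. by move=> [hs _]; rewrite trmx_inv hs. Qed.

Lemma inv_psd K (Lam : 'M[R]_K) : spd Lam -> forall z, 0 <= bl (invmx Lam) z z.
Proof.
move=> hL z.
have -> : bl (invmx Lam) z z = bl Lam (z *m invmx Lam) (z *m invmx Lam).
  rewrite /bl trmx_mul (@inv_sym K Lam hL) !mulmxA -[z *m invmx Lam *m Lam]mulmxA.
  by rewrite mulVmx ?(@spd_unit K Lam hL) // mulmx1.
exact: spd_psd.
Qed.
End S5.

Theorem corollary7p7 (R : realType) (N K D : nat) (gamma : nat -> R)
  (Lam : 'M[R]_K) (alpha : 'M[R]_(K, D)) (xi : 'M[R]_(N.-1 * D, D))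
  (T : R) (F : R -> 'M[R]_(N.-1 * K)) (H : R -> 'M[R]_(N.-1 * K, D)) :
  (2 <= N)%N -> (K <= D)%N ->
  (forall n, (1 <= n <= N)%N -> 0 < gamma n) ->
  (forall n, (1 <= n <= N)%N -> gamma n <= gamma N) ->
  spd Lam ->
  0 < T ->
  (forall i j, {within `[0, T[, continuous (fun t => F t i j)}) ->
  (forall i j, {within `[0, T[, continuous (fun t => H t i j)}) ->
  (forall t, 0 < t < T -> forall i j,
      is_derive t 1 (fun s => F s i j) (ricF N gamma Lam alpha (F t) (H t) i j)) ->
  (forall t, 0 < t < T -> forall i j,
      is_derive t 1 (fun s => H s i j) (ricH N gamma Lam alpha xi (F t) (H t) i j)) ->
  F 0 = 0 -> H 0 = 0 ->
  forall tau, 0 <= tau < T -> psd (F tau).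
Proof.
move=> N2 KD gpos gle hL T0 Fc Hc Fd Hd F0 H0 tau htau b.
pose A := kron (1%:M : 'M[R]_(N.-1)) (invmx Lam).
pose Q t := kron (Gam N gamma)
   (Mterm N gamma alpha (H t) *m (Mterm N gamma alpha (H t))^T).
have := @core_any R _ F Q A T _ _ _ Fc _ F0 tau htau b^T.
rewrite /bl trmxK; apply => //.
- by rewrite /A kron_tr trmx1 (@inv_sym R K Lam hL).
- move=> u; apply: rq_kron1 => a.
  have -> : bil (invmx Lam) a a = rq (invmx Lam) (\row_k a k).
    by rewrite rqE /qfs /bil; apply: eq_bigr => i _; apply: eq_bigr => j _; rewrite !mxE.
  exact: (@inv_psd R K Lam hL).
- move=> t _ u; apply: rq_kron_MMt; exact: Gam_psd.
Qed.
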